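(* Let $(G,k)$ be an instance, let $v$ be a large-sparse vertex, and let $B\subseteq V\setminus\{v\}$ with $|B|\le 2k$ be such that $G-B$ has no cycle passing through $v$. Let $C$ be a connected component of $G-v-B$ that contains a neighbor of $v$, is a tree, and has no vertex adjacent to a vertex of $B$. Then $(G,k)$ is a yes-instance if and only if $(G-V(C),k)$ is a yes-instance.
   Context: Graphs are undirected, without self-loops, possibly with multi-edges. $N(v)$ is the set of vertices adjacent to $v$; $\rho(v)$ is the number of unordered pairs $\{u_1,u_2\}\subseteq N(v)$ joined by at least one edge. A vertex $v$ is large-sparse if $|N(v)|>7k$ and $\rho(v)\le |N(v)|(|N(v)|-1)/4$. A vertex set induces a clique if between any two distinct vertices there is exactly one edge, and a tree if it is connected and acyclic (two parallel edges form a cycle). A feasible solution is $X\subseteq V$, $|X|\le k$, with every component of $G-X$ a clique or a tree; $(G,k)$ is a yes-instance if a feasible solution exists. *)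

(* Defs.v *)
(* A multigraph on a finite vertex type T is given by a
   vertex set V : {set T} together with an edge-multiplicity function
   m : T -> T -> nat (symmetric, zero on the diagonal: no self-loops).
   Only edges between vertices of V are relevant; the subgraph induced by
   a set S is obtained by restricting attention to S. *)
From mathcomp Require Import all_boot all_order.
Set Implicit Arguments. Unset Strict Implicit. Unset Printing Implicit Defensive.

Section Graphs.
Variable T : finType.
Variable m : T -> T -> nat.

Definition multigraph := (forall x y, m x y = m y x) /\ (forall x, m x x = 0).

Definition adj (x y : T) : bool := 0 < m x y.

Definition nbhd (V : {set T}) (v : T) : {set T} := [set u in V | (u != v) && adj v u].

Definition rho (V : {set T}) (v : T) : nat :=
  #|[set E : {set T} | (E \subset nbhd V v) &&
      [exists x, exists y, (x != y) && (E == [set x; y]) && adj x y]]|.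

Definition large_sparse (V : {set T}) (k : nat) (v : T) : bool :=
  (7 * k < #|nbhd V v|) && (4 * rho V v <= #|nbhd V v| * (#|nbhd V v| - 1)).

Definition adj_in (S : {set T}) : rel T := fun x y => [&& x \in S, y \in S & adj x y].

(* a cycle in the subgraph induced by S, given as a sequence of distinct
   vertices: either two vertices joined by at least two parallel edges, or
   at least three vertices cyclically adjacent *)
Definition is_cycle (S : {set T}) (s : seq T) : bool :=
  [&& uniq s, all (mem S) s &
    match s with
    | [:: a; b] => 1 < m a b
    | _ => (2 < size s) && cycle adj s
    end].

Definition acyclic_set (S : {set T}) : Prop := forall s, ~~ is_cycle S s.

Definition connected_set (S : {set T}) : Prop :=
  forall x y, x \in S -> y \in S -> connect (adj_in S) x y.

Definition is_clique (S : {set T}) : Prop :=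
  forall x y, x \in S -> y \in S -> x != y -> m x y = 1.

Definition is_tree (S : {set T}) : Prop := connected_set S /\ acyclic_set S.

Definition comp_of (W : {set T}) (x : T) : {set T} := [set y in W | connect (adj_in W) x y].

Definition is_component (W C : {set T}) : Prop := exists2 x, x \in W & C = comp_of W x.

Definition feasible (V : {set T}) (k : nat) (X : {set T}) : Prop :=
  [/\ X \subset V, #|X| <= k &
    forall C, is_component (V :\: X) C -> is_clique C \/ is_tree C].

Definition yes_instance (V : {set T}) (k : nat) : Prop := exists X, feasible V k X.

Definition cycle_through (W : {set T}) (v : T) : Prop :=
  exists s, is_cycle W s /\ v \in s.

End Graphs.

(* Main.v *)
Require Import Defs.
From mathcomp Require Import all_boot all_order.
From mathcomp Require Import zify.
Set Implicit Arguments. Unset Strict Implicit. Unset Printing Implicit Defensive.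

Lemma adj_sym (T : finType) (m : T -> T -> nat) : multigraph m -> symmetric (adj m).
Proof. by case=> Hs _ x y; rewrite /adj Hs. Qed.

Lemma adj_in_sym (T : finType) (m : T -> T -> nat) S : multigraph m -> symmetric (adj_in m S).
Proof. move=> H x y; rewrite /adj_in (adj_sym H x y); by case: (x \in S); case: (y \in S). Qed.

Lemma conn_mono (T : finType) (m : T -> T -> nat) (S S' : {set T}) x y :
  S \subset S' -> connect (adj_in m S) x y -> connect (adj_in m S') x y.
Proof.
move=> sS; apply: connect_sub => a b /and3P [aS bS ab]; apply: connect1.
by rewrite /adj_in (subsetP sS _ aS) (subsetP sS _ bS).
Qed.

Lemma comp_sub (T : finType) (m : T -> T -> nat) W x : comp_of m W x \subset W.
Proof. by apply/subsetP=> y; rewrite inE => /andP[]. Qed.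

Lemma comp_in (T : finType) (m : T -> T -> nat) W x0 z y :
  z \in comp_of m W x0 -> connect (adj_in m W) z y ->
  connect (adj_in m (comp_of m W x0)) z y.
Proof.
move=> zK /connectP [p pp ->]; elim: p z zK pp => [|w p IH] z zK /=; first by rewrite connect0.
case/andP=> zw pp.
have wK : w \in comp_of m W x0.
  move: zK zw; rewrite !inE => /andP[_ c] zw; move: (zw) => /and3P[_ -> _] /=.
  by apply: connect_trans c (connect1 zw).
apply: connect_trans (IH w wK pp); apply: connect1.
by rewrite /adj_in zK wK; case/and3P: zw.
Qed.

Lemma comp_connected (T : finType) (m : T -> T -> nat) W x :
  multigraph m -> connected_set m (comp_of m W x).
Proof.
move=> H a b aK bK; apply: (comp_in aK).
move: (aK) bK; rewrite !inE => /andP[_ xa] /andP[_ xb].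
by apply: connect_trans _ xb; rewrite (sym_connect_sym (adj_in_sym W H)).
Qed.

Lemma comp_restrict (T : finType) (m : T -> T -> nat) (W W' : {set T}) x :
  x \in W -> W' \subset W -> comp_of m W x \subset W' -> comp_of m W x = comp_of m W' x.
Proof.
move=> xW sW sK; apply/setP=> y; apply/idP/idP.
- move=> yK; rewrite inE (subsetP sK _ yK) /=.
  have xK : x \in comp_of m W x by rewrite inE xW connect0.
  apply: conn_mono sK _; apply: comp_in xK _; by move: yK; rewrite inE => /andP[].
- rewrite !inE => /andP[yW c]; rewrite (subsetP sW _ yW); exact: conn_mono sW c.
Qed.

Lemma comp_same (T : finType) (m : T -> T -> nat) W x y :
  multigraph m -> y \in comp_of m W x -> comp_of m W x = comp_of m W y.
Proof.
move=> H; rewrite inE => /andP[yW xy]; apply/setP=> z; rewrite !inE.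
by rewrite (same_connect (sym_connect_sym (adj_in_sym W H)) xy).
Qed.

Lemma cycle_mono (T : finType) (m : T -> T -> nat) (S S' : {set T}) s :
  is_cycle m S s -> {subset s <= S'} -> is_cycle m S' s.
Proof.
rewrite /is_cycle => /and3P[u _ c] sub; rewrite u c andbT /=.
by apply/allP=> z zs; exact: sub.
Qed.

Lemma cycle_props (T : finType) (m : T -> T -> nat) (S : {set T}) s :
  multigraph m -> is_cycle m S s ->
  [/\ uniq s, {subset s <= S}, 1 < size s & cycle (adj m) s].
Proof.
move=> H /and3P[u /allP a c]; split => //.
- by case: s c {u a} => [|x [|y [|z t]]].
- case: s c {u a} => [|x [|y [|z t]]] //= c.
  by rewrite /adj (ltn_trans _ c) // (proj1 H) (ltn_trans _ c).
Qed.

Lemma path_in (T : finType) (m : T -> T -> nat) (S : {set T}) x p :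
  path (adj_in m S) x p -> {subset p <= S} /\ path (adj m) x p.
Proof.
elim: p x => [|y p IH] x /=; first by [].
case/andP=> /and3P[_ yS xy] /IH [sp pp]; split; last by rewrite xy.
by move=> z; rewrite inE => /orP[/eqP -> //|]; exact: sp.
Qed.

Lemma closureC (T : finType) (m : T -> T -> nat) (V B C : {set T}) (v x y : T) :
  is_component m (V :\ v :\: B) C ->
  (forall x y, x \in C -> y \in B -> ~~ adj m x y) ->
  x \in C -> y \in V -> y != v -> adj m x y -> y \in C.
Proof.
case=> x0 _ -> HB xC yV yv xy.
have yB : y \notin B by apply/negP => yB; move: (HB _ _ xC yB); rewrite xy.
have yW : y \in V :\ v :\: B by rewrite !inE yB yv yV.
move: xC; rewrite inE => /andP[xW c]; rewrite inE yW /=; apply: connect_trans c (connect1 _).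
by rewrite /adj_in xW yW xy.
Qed.

Lemma path_same (T : finType) (m : T -> T -> nat) (V B C : {set T}) (v a : T) p :
  multigraph m -> is_component m (V :\ v :\: B) C ->
  (forall x y, x \in C -> y \in B -> ~~ adj m x y) ->
  path (adj m) a p -> {subset a :: p <= V} -> v \notin a :: p ->
  forall z, z \in p -> (z \in C) = (a \in C).
Proof.
move=> H HC HB; elim: p a => [|w p IH] a //= /andP[aw pp] sub nv z.
have aV : a \in V by apply: sub; rewrite inE eqxx.
have wV : w \in V by apply: sub; rewrite !inE eqxx orbT.
move: nv; rewrite !inE !negb_or => /and3P[va vw vp].
have e : (w \in C) = (a \in C).
  apply/idP/idP => [wC|aC].
  - by apply: (closureC HC HB wC aV); [rewrite eq_sym | rewrite adj_sym].
  - by apply: (closureC HC HB aC wV); [rewrite eq_sym|].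
move=> /orP[/eqP -> //|zp]; rewrite -e; apply: IH => //.
- by move=> t tin; apply: sub; rewrite inE tin orbT.
- by rewrite inE negb_or vw.
Qed.

Lemma uniq_nb (T : finType) (m : T -> T -> nat) (V B C : {set T}) (v a b : T) :
  multigraph m -> v \in V -> B \subset V :\ v ->
  ~ cycle_through m (V :\: B) v ->
  is_component m (V :\ v :\: B) C -> is_tree m C ->
  a \in C -> b \in C -> adj m v a -> adj m v b -> a = b.
Proof.
move=> H vV sB Hnc HC [Ccon _] aC bC va vb; apply/eqP/negPn/negP => ab.
have CW : C \subset V :\ v :\: B by case: HC => x0 _ ->; exact: comp_sub.
case/connectP: (Ccon _ _ aC bC) => p pp bl.
case: (shortenP pp) bl => p' pp' up' _ bl.
case: (path_in pp') => sp' pa.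
have vnC : v \notin C by apply/negP => vC; move: (subsetP CW _ vC); rewrite !inE eqxx /= ?andbF.
have vnB : v \notin B by apply/negP => vC; move: (subsetP sB _ vC); rewrite !inE eqxx /= ?andbF.
case: p' pp' up' sp' pa bl => [|w p''] pp' up' sp' pa bl; first by move: ab; rewrite bl eqxx.
apply: Hnc; exists [:: v, a, w & p'']; split; last by rewrite inE eqxx.
rewrite /is_cycle.
have inC t : t \in a :: w :: p'' -> t \in C.
  by rewrite inE => /orP[/eqP -> //|]; exact: sp'.
have tW t : t \in a :: w :: p'' -> t \in V :\: B.
  by move=> /inC /(subsetP CW); rewrite !inE => /and3P[-> _ ->].
apply/and3P; split.
- rewrite cons_uniq up' andbT; apply/negP => /inC; by rewrite (negbTE vnC).
- apply/allP => t; rewrite inE => /orP[/eqP -> |/tW //]; by rewrite !inE vnB vV.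
- change (path (adj m) v (rcons [:: a, w & p''] v)).
  rewrite rcons_path (adj_sym H) -[last v _]/(last a (w :: p'')) -bl vb andbT.
  by rewrite /= va.
Qed.

Lemma path_to_in (T : finType) (m : T -> T -> nat) (S : {set T}) x p :
  path (adj m) x p -> {subset x :: p <= S} -> path (adj_in m S) x p.
Proof.
elim: p x => [|y p IH] x //= /andP[xy pp] sub.
rewrite /adj_in xy (sub x) ?(sub y) ?inE ?eqxx ?orbT //=.
apply: IH pp _ => t tin; apply: sub; by rewrite inE tin orbT.
Qed.

Lemma easy_dir (T : finType) (m : T -> T -> nat) (V C : {set T}) k :
  multigraph m -> yes_instance m V k -> yes_instance m (V :\: C) k.
Proof.
move=> H [X [XV Xk HX]]; exists (X :\: C); split.
- apply/subsetP => y; rewrite !inE => /andP[yC yX]; by rewrite yC (subsetP XV _ yX).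
- apply: leq_trans Xk; apply: subset_leq_card; exact: subsetDl.
move=> K [x xW' ->].
have sW : (V :\: C) :\: (X :\: C) \subset V :\: X.
  by apply/subsetP => y; rewrite !inE; case: (y \in X); case: (y \in C).
have xW : x \in V :\: X by exact: (subsetP sW).
have sub : comp_of m ((V :\: C) :\: (X :\: C)) x \subset comp_of m (V :\: X) x.
  apply/subsetP => y; rewrite !inE => /andP[yW c].
  rewrite (conn_mono sW c) andbT; move: yW.
  by case: (y \in X); case: (y \in C).
case: (HX (comp_of m (V :\: X) x)); first by exists x.
- move=> Hc; left => a b aK bK; apply: Hc; exact: (subsetP sub).
- move=> [_ Hac]; right; split; first exact: comp_connected.
  move=> s; apply/negP => cs; move: (Hac s) => /negP; apply.
  apply: (cycle_mono cs) => t ts; apply: (subsetP sub).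
  by case/and3P: cs => _ /allP /(_ t ts).
Qed.

Lemma hard_dir (T : finType) (m : T -> T -> nat) (V : {set T}) (k : nat)
  (v : T) (B C : {set T}) :
  multigraph m ->
  v \in V ->
  large_sparse m V k v ->
  B \subset V :\ v ->
  #|B| <= 2 * k ->
  ~ cycle_through m (V :\: B) v ->
  is_component m (V :\ v :\: B) C ->
  (exists2 u, u \in C & u \in nbhd m V v) ->
  is_tree m C ->
  (forall x y, x \in C -> y \in B -> ~~ adj m x y) ->
  yes_instance m (V :\: C) k -> yes_instance m V k.
Proof.
move=> H vV Hls sB Bk Hnc HC [u uC uN] [Ccon Cac] HB [X [XV Xk HX]].
have CW : C \subset V :\ v :\: B by case: HC => x0 _ ->; exact: comp_sub.
have CV : C \subset V.
  by apply/subsetP => y /(subsetP CW); rewrite !inE => /and3P[_ _ ->].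
have vnC : v \notin C.
  by apply/negP => vC; move: (subsetP CW _ vC); rewrite !inE eqxx /= ?andbF.
have vnB : v \notin B.
  by apply/negP => vC; move: (subsetP sB _ vC); rewrite !inE eqxx /= ?andbF.
have XnC y : y \in C -> y \notin X.
  by move=> yC; apply/negP => /(subsetP XV); rewrite inE yC.
exists X; split.
- by apply: subset_trans XV _; exact: subsetDl.
- exact: Xk.
move=> D [x xW ->] {D}.
set W := V :\: X.
have CsW : C \subset W.
  apply/subsetP => y yC; by rewrite inE (XnC _ yC) (subsetP CV _ yC).
case: (boolP [exists c, (c \in comp_of m W x) && (c \in C)]); last first.
  move=> /existsPn nc.
  have sub : comp_of m W x \subset (V :\: C) :\: X.
    apply/subsetP => y yD; move: (nc y); rewrite yD /= => yC.
    move: (subsetP (comp_sub m W x) _ yD); by rewrite !inE yC.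
  have xW' : x \in (V :\: C) :\: X by apply: (subsetP sub); rewrite inE xW connect0.
  rewrite (comp_restrict xW _ sub); last first.
    by apply/subsetP => y; rewrite !inE => /and3P[-> _ ->].
  by apply: HX; exists x.
case/existsP => c /andP[cD cC].
rewrite (comp_same H cD).
have vu : adj m v u by move: uN; rewrite inE => /and3P[].
case: (boolP (v \in X)) => vX.
  right; suff -> : comp_of m W c = C by [].
  apply/setP => y; apply/idP/idP => [|yC].
  - rewrite inE => /andP[yW /connectP [p pp ->]].
    case: (path_in pp) => sp pa.
    have sub' : {subset c :: p <= V}.
      move=> t; rewrite inE => /orP[/eqP -> |/sp]; first exact: (subsetP CV).
      by rewrite inE => /andP[].
    have nv : v \notin c :: p.
      rewrite inE negb_or; apply/andP; split; first by apply/negP => /eqP vc; move: vnC; rewrite vc cC.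
      by apply/negP => /sp; rewrite inE vX.
    case: p pp sp pa sub' nv {yW} => [|w p] pp sp pa sub' nv //=.
    rewrite (path_same H HC HB pa sub' nv) //; exact: mem_last.
  - rewrite inE (subsetP CsW _ yC) /=; apply: conn_mono CsW _; exact: Ccon.
set D := comp_of m W c.
have uW : u \in W by apply: (subsetP CsW).
have vW : v \in W by rewrite inE vX vV.
have vD : v \in D.
  rewrite inE vW /=; apply: connect_trans (conn_mono CsW (Ccon _ _ cC uC)) (connect1 _).
  by rewrite /adj_in uW vW (adj_sym H).
have DW : D \subset W by exact: comp_sub.
set W' := (V :\: C) :\: X.
set Kv := comp_of m W' v.
have vW' : v \in W' by rewrite !inE vX vnC vV.
have KW' : Kv \subset W' by exact: comp_sub.
have DK y : y \in D -> y \notin C -> y \in Kv.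
  move=> yD ynC; rewrite /D (comp_same H vD) inE in yD; case/andP: yD => yW.
  case/connectP => p pp yl; subst y; case: (shortenP pp) ynC => p' pp' up' _ ynC.
  case: (path_in pp') => sp' pa.
  case: p' pp' up' sp' pa ynC => [|a p''] pp' up' sp' pa ynC.
    by rewrite inE vW' connect0.
  have aW : a \in W by apply: sp'; rewrite inE eqxx.
  case/andP: pa => va pa.
  have sub' : {subset a :: p'' <= V}.
    by move=> t /sp'; rewrite inE => /andP[].
  have nv : v \notin a :: p'' by case/andP: up'.
  have e t : t \in a :: p'' -> (t \in C) = (a \in C).
    rewrite inE => /orP[/eqP -> //|tp]; exact: (path_same H HC HB pa sub' nv).
  have anC : a \notin C by rewrite -(e (last a p'')); [exact: ynC | exact: mem_last].
  have sW' : {subset v :: a :: p'' <= W'}.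
    move=> t; rewrite inE => /orP[/eqP -> //|tin].
    by move: (sp' _ tin) (e _ tin); rewrite (negbTE anC) !inE => /andP[-> ->] ->.
  have yW' : last a p'' \in W' by apply: sW'; rewrite inE mem_last orbT.
  rewrite inE yW' /=; apply/connectP; exists (a :: p'') => //.
  by apply: path_to_in sW'; rewrite /= va.
right; split; first exact: comp_connected.
move=> s; apply/negP => cs.
case: (cycle_props H cs) => us sD ss cyc.
have sV : {subset s <= V}.
  by move=> t /sD /(subsetP DW); rewrite inE => /andP[].
have CVB : {subset C <= V :\: B}.
  by move=> t /(subsetP CW); rewrite !inE => /and3P[-> _ ->].
case: (boolP (has (mem C) s)) => [/hasP [c' c's c'C]|].
  case: (boolP (v \in s)) => vs.
    apply: Hnc; exists s; split => //; apply: (cycle_mono cs) => t ts.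
    case: (rot_to vs) => i t0 ri.
    have ur : uniq (v :: t0) by rewrite -ri rot_uniq.
    have cr : cycle (adj m) (v :: t0) by rewrite -ri rot_cycle.
    have mr z : (z \in s) = (z \in v :: t0) by rewrite -ri mem_rot.
    have sz : 1 < size (v :: t0) by rewrite -ri size_rot.
    clear ri; case: t0 ur cr mr sz => [|a t'] // ur cr mr _.
    move: cr; rewrite /= rcons_path => /andP[_ /andP[pa _]].
    have sub' : {subset a :: t' <= V} by move=> z zin; apply: sV; rewrite mr inE zin orbT.
    have nv : v \notin a :: t' by case/andP: ur.
    have e z : z \in a :: t' -> (z \in C) = (a \in C).
      rewrite inE => /orP[/eqP -> //|zp]; exact: (path_same H HC HB pa sub' nv).
    have aC : a \in C.
      rewrite -(e c') //; move: c's; rewrite mr inE => /orP[/eqP cv|//].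
      by move: vnC; rewrite -cv; move: c'C => /= ->.
    move: ts; rewrite mr inE => /orP[/eqP -> |tin]; first by rewrite !inE vnB vV.
    by apply: CVB; rewrite (e _ tin).
  case: s us sD ss cyc cs c's vs sV => [|a t] // us sD ss cyc cs c's vs sV.
  move: cyc; rewrite /= rcons_path => /andP[pa _].
  have sub' : {subset a :: t <= V} by exact: sV.
  have e z : z \in a :: t -> (z \in C) = (a \in C).
    rewrite inE => /orP[/eqP -> //|zp]; exact: (path_same H HC HB pa sub' vs).
  have aC : a \in C by rewrite -(e c').
  move: (Cac (a :: t)) => /negP; apply; apply: (cycle_mono cs) => z zin.
  by rewrite (e _ zin).
move=> /hasPn nC.
have sK : {subset s <= Kv} by move=> t ts; apply: DK; [exact: sD | exact: nC].
case: (HX Kv); first by exists v.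
  move=> Kcl; exfalso.
  have vK : v \in Kv by rewrite inE vW' connect0.
  have KV : {subset Kv <= V} by move=> t /(subsetP KW'); rewrite !inE => /and3P[].
  have s3 : 2 < size s.
    case: s us sD ss cyc cs sK {sV nC} => [|a [|b [|z t]]] // us _ _ _ cs sK.
    case/and3P: cs => _ _ mab.
    have ab : a != b by move: us; rewrite /= inE andbT.
    have bs : b \in [:: a; b] by rewrite !inE eqxx orbT.
    by rewrite (Kcl a b (sK a (mem_head _ _)) (sK b bs) ab) in mab.
  have c1 : size s <= #|Kv|.
    rewrite -(card_uniqP us); apply: subset_leq_card; apply/subsetP => t; exact: sK.
  have c2 : #|Kv| = (#|Kv :\ v|).+1 by rewrite (cardsD1 v Kv) vK.
  have c3 : #|Kv :\ v :\: B| <= 1.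
    apply/card_le1_eqP => a b /setDP [/setD1P [av aK] aB] /setDP [/setD1P [bv bK] bB].
    apply/eqP/negPn/negP => ab; apply: Hnc; exists [:: v; a; b]; split; last by rewrite inE eqxx.
    have va : v != a by rewrite eq_sym.
    have {}ab : a != b by rewrite eq_sym.
    rewrite /is_cycle /= !inE negb_or (eq_sym v b) va bv ab aB bB vnB vV (KV a aK) (KV b bK) /adj.
    by rewrite (Kcl v a vK aK va) (Kcl a b aK bK ab) (Kcl b v bK vK bv).
  have c4 : #|Kv :\ v| <= #|B| + #|Kv :\ v :\: B|.
    apply: leq_trans (leq_card_setU _ _) => //; apply: subset_leq_card.
    by apply/subsetP => t; rewrite !inE; case: (t \in B).
  set N := nbhd m V v.
  have c5 : #|N :&: C| <= 1.
    apply/card_le1_eqP => a b; rewrite !inE => /andP[/and3P[_ _ va] aC] /andP[/and3P[_ _ vb] bC].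
    symmetry; exact: (uniq_nb H vV sB Hnc HC (conj Ccon Cac) aC bC va vb).
  have c6 : #|N| <= #|N :&: C| + #|X| + #|Kv :\ v|.
    apply: (@leq_trans #|(N :&: C :|: X) :|: (Kv :\ v)|).
      apply: subset_leq_card; apply/subsetP => t tN.
      case: (boolP (t \in C)) => tC; first by rewrite !in_setU in_setI tN tC.
      case: (boolP (t \in X)) => tX; first by rewrite !in_setU tX orbT.
      move: tN; rewrite inE => /and3P[tV tv vt].
      have tW' : t \in W' by rewrite !inE tX tC tV.
      rewrite in_setU; apply/orP; right; rewrite in_setD1 tv andTb inE tW' andTb; apply: connect1.
      by rewrite /adj_in vW' vt tW'.
    apply: leq_trans (leq_card_setU _ _) _.
    by rewrite leq_add2r; apply: leq_trans (leq_card_setU _ _) _.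
  case/andP: Hls => Hl _.
  rewrite -/N in Hl.
  move: s3 c1 c2 c3 c4 c5 c6 Hl Bk Xk.
  move: (size s) #|Kv| #|Kv :\ v| #|Kv :\ v :\: B| #|B| #|N :&: C| #|X| #|N| => n1 n2 n3 n4 n5 n6 n7 n8.
  clear - k. lia.
move=> [_ Kac]; move: (Kac s) => /negP; apply; exact: (cycle_mono cs).
Qed.

Theorem mainTheorem8 (T : finType) (m : T -> T -> nat) (V : {set T}) (k : nat)
  (v : T) (B C : {set T}) :
  multigraph m ->
  v \in V ->
  large_sparse m V k v ->
  B \subset V :\ v ->
  #|B| <= 2 * k ->
  ~ cycle_through m (V :\: B) v ->
  is_component m (V :\ v :\: B) C ->
  (exists2 u, u \in C & u \in nbhd m V v) ->
  is_tree m C ->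
  (forall x y, x \in C -> y \in B -> ~~ adj m x y) ->
  (yes_instance m V k <-> yes_instance m (V :\: C) k).
Proof.
move=> H vV Hls sB Bk Hnc HC Hu Ht HB; split; first exact: easy_dir.
exact: (hard_dir H vV Hls sB Bk Hnc HC Hu Ht HB).
Qed.
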